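(* Let $n\ge 2$, let $G=K_n$ on vertices $v_1,\dots,v_n$ with edge weights $w_{\{i,j\}}\in(0,1)$, and let $\alpha\in(0,1)$. Then $\operatorname{cptw}(G,\alpha)=\left\lceil \log_{P_0}(1-\alpha)\right\rceil$, where $P_0=\min_{1\le i\le n}\prod_{j\ne i}(1-w_{\{i,j\}})$.
   Context: Let $G$ be a finite simple graph in which each edge $uv$ has a weight $w_{uv}\in(0,1)$. Weighted zero forcing: start with a set $B\subseteq V(G)$ of blue vertices, all other vertices white. In each round, simultaneously, for every blue vertex $u$ that has exactly one white neighbor $v$ (with respect to the coloring at the start of the round), $u$ attempts to force $v$, succeeding with probability $w_{uv}$, all attempts being independent; a white vertex becomes blue at the end of the round if at least one attempt on it succeeds. $B$ is a weighted zero forcing set of $G$ if this process can eventually color all of $V(G)$ blue (equivalently, $B$ is a zero forcing set of the underlying unweighted graph under the standard rule); $\operatorname{Z}(G)$ is the minimum size of such a set. $\operatorname{ptw}(G,B)$ is the random variable giving the round in which the last white vertex becomes blue ($0$ if $B=V(G)$). For $\alpha\in(0,1)$, $\operatorname{cptw}(G,B,\alpha)$ is the least $t\ge 0$ with $\Pr(\operatorname{ptw}(G,B)\le t)\ge\alpha$, and $\operatorname{cptw}(G,\alpha)$ is the minimum of $\operatorname{cptw}(G,B,\alpha)$ over weighted zero forcing sets $B$ with $|B|=\operatorname{Z}(G)$. *)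

(* Defs.v *)
From HB Require Import structures.
From mathcomp Require Import all_boot all_order all_algebra.
From mathcomp Require Import reals exp.
Set Implicit Arguments. Unset Strict Implicit. Unset Printing Implicit Defensive.
Import Order.TTheory GRing.Theory Num.Theory.
Local Open Scope ring_scope.

Section WeightedZeroForcing.
Variables (R : realType) (T : finType) (adj : rel T) (w : T -> T -> R).

Definition white_nbrs (S : {set T}) (u : T) : {set T} :=
  [set v | adj u v & v \notin S].

Definition forces (S : {set T}) (u v : T) : bool :=
  (u \in S) && (white_nbrs S u == [set v]).

Definition zf_step (S : {set T}) : {set T} :=
  S :|: [set v | [exists u, forces S u v]].

Definition zero_forcing_set (B : {set T}) : bool :=
  iter #|T| zf_step B == [set: T].

(* zero forcing number Z(G) (V(G) is always a zero forcing set) *)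
Definition Znum : nat :=
  \big[minn/#|T|]_(B : {set T} | zero_forcing_set B) #|B|.

(* probability that white vertex v becomes blue in a round starting at S:
   at least one of the independent attempts on v succeeds *)
Definition p_col (S : {set T}) (v : T) : R :=
  1 - \prod_(u | forces S u v) (1 - w u v).

(* transition probability from blue set S to blue set S' in one round
   (distinct white vertices are coloured independently) *)
Definition trans (S S' : {set T}) : R :=
  if S \subset S' then
    \prod_(v in ~: S) (if v \in S' then p_col S v else 1 - p_col S v)
  else 0.

(* prob_done t S = Pr(ptw(G,S) <= t) *)
Fixpoint prob_done (t : nat) (S : {set T}) : R :=
  match t with
  | 0%N => (S == [set: T])%:R
  | t'.+1 => if S == [set: T] then 1
             else \sum_(S' : {set T}) trans S S' * prob_done t' S'
  end.

(* t = cptw(G,B,alpha): least t >= 0 with Pr(ptw(G,B) <= t) >= alpha *)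
Definition is_cptw_set (B : {set T}) (alpha : R) (t : nat) : Prop :=
  alpha <= prob_done t B /\ (forall s : nat, (s < t)%N -> prob_done s B < alpha).

(* t = cptw(G,alpha): minimum of cptw(G,B,alpha) over zero forcing sets
   B with |B| = Z(G) *)
Definition is_cptw (alpha : R) (t : nat) : Prop :=
  (exists B : {set T}, [/\ zero_forcing_set B, #|B| = Znum & is_cptw_set B alpha t])
  /\ (forall (B : {set T}) (t' : nat), zero_forcing_set B -> #|B| = Znum ->
        is_cptw_set B alpha t' -> (t <= t')%N).

End WeightedZeroForcing.

Definition Kn_adj (n : nat) : rel 'I_n := fun i j => i != j.

(* P_0 = min_i prod_{j <> i} (1 - w_{ij}); the default 1 of the min is
   irrelevant for n >= 1 since every product lies in (0,1]. *)
Definition P0 (R : realType) (n : nat) (w : 'I_n -> 'I_n -> R) : R :=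
  \big[Num.min/1]_(i < n) \prod_(j < n | j != i) (1 - w i j).

Definition logb (R : realType) (b x : R) : R := ln x / ln b.

(* Main.v *)
Require Import Defs.
From HB Require Import structures.
From mathcomp Require Import all_boot all_order all_algebra.
From mathcomp Require Import reals exp.
From mathcomp Require Import ring lra zify.
Import Order.TTheory GRing.Theory Num.Theory.
Local Open Scope ring_scope.

Lemma keyq (R : realType) (q a : R) (s : nat) : 0 < q < 1 -> 0 < a < 1 ->
  (q ^+ s <= a) = (Num.ceil (ln a / ln q) <= s%:Z).
Proof.
move=> /andP[q0 q1] /andP[a0 a1].
have lq : ln q < 0 by rewrite -ln1 ltr_ln ?posrE.
rewrite ceil_le_int -(ler_ln (x:=q^+s)) ?posrE ?exprn_gt0 // lnXn //.
by rewrite ler_ndivrMr // -mulr_natr mulrC pmulrn.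
Qed.

Definition cn (R : realType) (a x : R) : nat := `|Num.ceil (ln (R:=R) a / ln (R:=R) x)|%N.
Arguments cn {R}.

Lemma ceil_cn (R : realType) (a x : R) : 0 < x < 1 -> 0 < a < 1 ->
  Num.ceil (ln a / ln x) = (cn a x)%:Z.
Proof.
move=> /andP[x0 x1] /andP[a0 a1].
have lq : ln x < 0 by rewrite -ln1 ltr_ln ?posrE.
rewrite /cn gez0_abs // ceil_ge0.
apply: (@lt_le_trans _ _ 0); first by rewrite ltrN10.
by rewrite ler_ndivlMr // mul0r ln_le0 // ltW.
Qed.

Lemma keyn (R : realType) (a x : R) (s : nat) : 0 < x < 1 -> 0 < a < 1 ->
  (x ^+ s <= a) = (cn a x <= s)%N.
Proof. by move=> hx ha; rewrite keyq // ceil_cn. Qed.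

Lemma cn_mono (R : realType) (a x y : R) : 0 < x <= y -> y < 1 -> 0 < a < 1 ->
  (cn a x <= cn a y)%N.
Proof.
move=> /andP[x0 xy] y1 ha.
have hx : 0 < x < 1 by rewrite x0 /= (le_lt_trans xy y1).
have hy : 0 < y < 1 by rewrite y1 andbT (lt_le_trans x0 xy).
rewrite -keyn //; apply: le_trans (_ : y ^+ cn a y <= a).
  by apply: lerXn2r; rewrite // nnegrE ltW // (lt_le_trans x0 xy).
by rewrite keyn.
Qed.

Lemma bigminn_le (I : eqType) (r : seq I) (P : pred I) (F : I -> nat) x j :
  j \in r -> P j -> (\big[minn/x]_(i <- r | P i) F i <= F j)%N.
Proof.
elim: r => // a r IH; rewrite inE big_cons => /orP[/eqP<-|jr] Pj.
  by rewrite Pj geq_minl.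
case: (P a); last exact: IH.
by apply: leq_trans (geq_minr _ _) (IH jr Pj).
Qed.

Section K.
Variables (R : realType) (n : nat) (w : 'I_n -> 'I_n -> R).
Hypothesis hn : (2 <= n)%N.
Hypothesis wsym : forall i j, w i j = w j i.
Hypothesis wbd : forall i j, i != j -> 0 < w i j < 1.

Local Notation adj := (Kn_adj (n:=n)).

Lemma white_comp (v u : 'I_n) : u != v ->
  white_nbrs adj (~:[set v]) u = [set v].
Proof.
move=> uv; apply/setP=> x; rewrite !inE /Kn_adj negbK.
by case: (eqVneq x v) => [->|]; rewrite ?andbT ?andbF.
Qed.

Lemma forces_comp (v u x : 'I_n) :
  forces adj (~:[set v]) u x = (u != v) && (x == v).
Proof.
rewrite /forces !inE; case: (eqVneq u v) => //= uv.
rewrite white_comp //; apply/eqP/eqP => [/set1_inj->|->] //.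
Qed.

Lemma white_big (B : {set 'I_n}) u : u \in B -> white_nbrs adj B u = ~: B.
Proof.
move=> uB; apply/setP => x; rewrite !inE /Kn_adj.
by case: (eqVneq u x) => [<-|]; rewrite ?uB.
Qed.

Lemma no_force (B : {set 'I_n}) : (1 < #|~: B|)%N -> zf_step adj B = B.
Proof.
move=> H; rewrite /zf_step; apply/setUidPl; apply/subsetP => x.
rewrite inE => /existsP[u /andP[uB /eqP]].
by rewrite white_big // => h; move: H; rewrite h cards1.
Qed.

Lemma not_zf (B : {set 'I_n}) : (1 < #|~:B|)%N -> ~~ zero_forcing_set adj B.
Proof.
move=> H; rewrite /zero_forcing_set.
have -> : forall k, iter k (zf_step adj) B = B.
  by elim => //= k ->; rewrite no_force.
apply/eqP => BT; move: H; by rewrite BT setCT cards0.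
Qed.

Lemma exists_other (v : 'I_n) : exists u : 'I_n, u != v.
Proof.
have : (0 < #|~:[set v]|)%N by rewrite cardsC1 card_ord; case: n hn => [|[]].
by case/card_gt0P => u; rewrite !inE => uv; exists u.
Qed.

Lemma zf_comp (v : 'I_n) : zero_forcing_set adj (~:[set v]).
Proof.
have step : zf_step adj (~:[set v]) = setT.
  apply/setP=> x; rewrite /zf_step in_setU in_setT.
  case: (eqVneq x v) => [->|xv]; last by rewrite in_setC in_set1 xv.
  apply/orP; right; rewrite inE; apply/existsP.
  have [u uv] := exists_other v.
  by exists u; rewrite forces_comp uv eqxx.
have stepT : zf_step adj setT = setT by rewrite /zf_step setTU.
have iT : forall k, iter k (zf_step adj) setT = setT by elim => //= k ->.
have e : #|'I_n| = n.-1.+1 by rewrite card_ord; case: (n) hn.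
by rewrite /zero_forcing_set e iterSr step iT.
Qed.

Lemma card_comp (v : 'I_n) : #|~:[set v]| = n.-1.
Proof. by rewrite cardsC1 card_ord. Qed.

Lemma Znum_eq : Znum adj = n.-1.
Proof.
have v0 : 'I_n := Ordinal (ltnW hn).
rewrite /Znum; apply/eqP; rewrite eqn_leq; apply/andP; split.
  rewrite -(card_comp v0); apply: bigminn_le; [exact: mem_index_enum | exact: zf_comp].
apply: (big_ind (fun m => n.-1 <= m)%N).
- by rewrite card_ord leq_pred.
- by move=> x y hx hy; rewrite leq_min hx hy.
move=> B zB; rewrite leqNgt; apply/negP => lt.
have : (1 < #|~: B|)%N.
  have := cardsC B; rewrite card_ord => h.
  have := hn; lia.
by move/not_zf; rewrite zB.
Qed.

Lemma card_is_comp (B : {set 'I_n}) : #|B| = n.-1 -> exists v, B = ~:[set v].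
Proof.
move=> h; have : #|~: B| == 1%N.
  have := cardsC B; rewrite card_ord h => e.
  apply/eqP; have := hn; lia.
by case/cards1P => v hv; exists v; rewrite -hv setCK.
Qed.

Definition q (v : 'I_n) : R := \prod_(j < n | j != v) (1 - w v j).

Lemma q_bd v : 0 < q v < 1.
Proof.
apply/andP; split.
  apply: prodr_gt0 => j jv; have /andP[_ h] : 0 < w v j < 1 by apply: wbd; rewrite eq_sym.
  by rewrite subr_gt0.
have [u uv] := exists_other v.
rewrite /q (bigD1 u) //=.
have /andP[h0 h1] : 0 < w v u < 1 by apply: wbd; rewrite eq_sym.
apply: (@le_lt_trans _ _ (1 - w v u)).
  rewrite -[X in _ <= X]mulr1; apply: ler_wpM2l; first by rewrite subr_ge0 ltW.
  apply: prodr_ile1 => j /andP[jv _].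
  have /andP[g0 g1] : 0 < w v j < 1 by apply: wbd; rewrite eq_sym.
  by rewrite subr_ge0 ltW // lerBlDr lerDl ltW.
by rewrite ltrBlDr ltrDl.
Qed.

Lemma pcol v : p_col adj w (~:[set v]) v = 1 - q v.
Proof.
rewrite /p_col /q; congr (1 - _).
rewrite (eq_bigl (fun u => u != v)); last by move=> u; rewrite forces_comp eqxx andbT.
by apply: eq_bigr => u _; rewrite wsym.
Qed.

Lemma subset_cases (v : 'I_n) (S : {set 'I_n}) : ~:[set v] \subset S -> S = ~:[set v] \/ S = setT.
Proof.
move=> sub; case: (boolP (v \in S)) => vS; [right|left]; apply/setP => x.
  rewrite in_setT; case: (eqVneq x v) => [->//|xv].
  by apply: (subsetP sub); rewrite !inE xv.
apply/idP/idP; last exact: (subsetP sub).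
move=> xS; rewrite !inE; apply/eqP => xv; by rewrite -xv xS in vS.
Qed.

Lemma compT v : ~:[set v] != setT :> {set 'I_n}.
Proof. apply/eqP => h; have : v \in ~:[set v] by rewrite h inE. by rewrite !inE eqxx. Qed.

Lemma trans_BB v : trans adj w (~:[set v]) (~:[set v]) = q v.
Proof.
rewrite /trans subxx setCK big_set1 !inE eqxx /= pcol; ring.
Qed.

Lemma trans_BT v : trans adj w (~:[set v]) setT = 1 - q v.
Proof. by rewrite /trans subsetT setCK big_set1 in_setT pcol. Qed.

Lemma trans_0 v (S : {set 'I_n}) : S != ~:[set v] -> S != setT -> trans adj w (~:[set v]) S = 0.
Proof.
move=> h1 h2; rewrite /trans; case: ifP => // sub.
by case: (subset_cases v S sub) => e; [move: h1|move: h2]; rewrite e eqxx.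
Qed.

Lemma pdT t : prob_done adj w t setT = 1.
Proof. by case: t => [|t] /=; rewrite eqxx. Qed.

Lemma pd v t : prob_done adj w t (~:[set v]) = 1 - q v ^+ t.
Proof.
elim: t => [|t IH] /=; first by rewrite (negbTE (compT v)) expr0 subrr.
rewrite (negbTE (compT v)) (bigD1 (~:[set v])) //= (bigD1 setT) /=;
  last by rewrite eq_sym compT.
rewrite big1 ?addr0; last first.
  by move=> S /andP[SB ST]; rewrite trans_0 // mul0r.
rewrite trans_BB trans_BT IH pdT exprS; ring.
Qed.

Variable alpha : R.
Hypothesis ha : 0 < alpha < 1.

Lemma ha' : 0 < 1 - alpha < 1.
Proof. case/andP: ha => h0 h1; apply/andP; split; lra. Qed.

Lemma cond v s : (alpha <= prob_done adj w s (~:[set v])) = (cn (1 - alpha) (q v) <= s)%N.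
Proof.
rewrite pd -keyn ?q_bd ?ha' //.
apply/idP/idP => h; lra.
Qed.

Lemma cptw_set v t : is_cptw_set adj w (~:[set v]) alpha t <-> t = cn (1 - alpha) (q v).
Proof.
split.
  move=> [h1 h2]; apply/eqP; rewrite eqn_leq -cond h1 andbT leqNgt; apply/negP => lt.
  by have := h2 _ lt; rewrite ltNge cond leqnn.
move=> ->; split; first by rewrite cond.
by move=> s st; rewrite ltNge cond -ltnNge.
Qed.

End K.
Arguments q {R n} w v.
Arguments q_bd {R n w}.
Arguments card_is_comp {n}.
Arguments cptw_set {R n w} hn wsym wbd {alpha} ha v t.
Arguments zf_comp {n}.
Arguments card_comp {n}.
Arguments Znum_eq {n}.
Arguments ha' {R alpha}.

Theorem mainTheorem7 (R : realType) (n : nat) (w : 'I_n -> 'I_n -> R) (alpha : R) :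
  (2 <= n)%N ->
  (forall i j, w i j = w j i) ->
  (forall i j, i != j -> 0 < w i j < 1) ->
  0 < alpha < 1 ->
  forall t : nat,
    is_cptw (Kn_adj (n:=n)) w alpha t <->
    (t%:Z = Num.ceil (logb (P0 w) (1 - alpha))).
Proof.
move=> hn wsym wbd ha t.
have v0 : 'I_n := Ordinal (ltnW hn).
set i0 := [arg min_(i < v0) q w i]%O.
have P0e : P0 w = q w i0 by rewrite /P0 (bigmin_eq_arg _ v0 xpredT) // => i _; case/andP: (q_bd hn wbd i) => _ /ltW.
have P0le : forall i, P0 w <= q w i by move=> i; rewrite /P0; exact: bigmin_le.
have hP : 0 < P0 w < 1 by rewrite P0e q_bd.
rewrite /logb ceil_cn // ?ha' //.
split.
  move=> [[B [zB cB hB]] hmin].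
  rewrite Znum_eq // in cB; have [v ev] := card_is_comp hn _ cB; subst B.
  move/(cptw_set hn wsym wbd ha): hB => et.
  have h1 : (t <= cn (1-alpha) (q w i0))%N.
    apply: (hmin (~:[set i0])); [exact: zf_comp | by rewrite Znum_eq // card_comp | exact/(cptw_set hn wsym wbd ha)].
  congr Posz; apply/eqP; rewrite eqn_leq P0e h1 /= et.
  have /andP[q0 q1] := q_bd hn wbd v; have /andP[r0 r1] := q_bd hn wbd i0.
  apply: cn_mono; rewrite ?ha' // ?q1 // r0 /= -P0e P0le //.
move=> /eqP; rewrite eqz_nat => /eqP et; split.
  exists (~:[set i0]); split; [exact: zf_comp | by rewrite Znum_eq // card_comp |].
  by apply/(cptw_set hn wsym wbd ha); rewrite et P0e.
move=> B t' zB cB hB.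
rewrite Znum_eq // in cB; have [v ev] := card_is_comp hn _ cB; subst B.
move/(cptw_set hn wsym wbd ha): hB => ->; rewrite et.
have /andP[q0 q1] := q_bd hn wbd v.
apply: cn_mono; rewrite ?ha' // ?q1 // (P0le v) andbT.
by case/andP: hP.
Qed.
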